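(* There is a constant $C$ such that for every sufficiently large $n$ there exists a $C_4$-free $2$-planar graph on $n$ vertices with at least $2.5n-C$ edges.
   Context: All graphs are finite and simple. A graph is $k$-planar if it admits a drawing in the plane in which every edge is crossed at most $k$ times. A graph is $C_\ell$-free if it contains no cycle of length $\ell$ as a subgraph. (The paper states the edge count as $2.5n-O(1)$.) *)

(* Defs.v *)
From Stdlib Require Import Reals List.
From mathcomp Require Import all_boot.
Set Implicit Arguments. Unset Strict Implicit. Unset Printing Implicit Defensive.

Definition simple_graph (n : nat) (e : rel 'I_n) : Prop :=
  (forall u v, e u v = e v u) /\ (forall u, e u u = false).

Definition num_edges (n : nat) (e : rel 'I_n) : nat :=
  #|[set p : 'I_n * 'I_n | (p.1 < p.2)%N && e p.1 p.2]|.

Definition C4_free (n : nat) (e : rel 'I_n) : Prop :=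
  ~ exists a b c d : 'I_n,
      [/\ uniq [:: a; b; c; d], e a b, e b c, e c d & e d a].

Local Open Scope R_scope.

Definition point := (R * R)%type.

Definition continuous_on01 (g : R -> point) : Prop :=
  forall t, 0 <= t <= 1 -> forall eps, 0 < eps -> exists delta, 0 < delta /\
    forall s, 0 <= s <= 1 -> Rabs (s - t) < delta ->
      Rabs (fst (g s) - fst (g t)) < eps /\ Rabs (snd (g s) - snd (g t)) < eps.

Definition is_drawing (n : nat) (e : rel 'I_n) (pos : 'I_n -> point)
    (arc : 'I_n -> 'I_n -> R -> point) : Prop :=
  injective pos /\
  forall u v : 'I_n, (u < v)%N -> e u v ->
    [/\ continuous_on01 (arc u v),
        arc u v 0 = pos u, arc u v 1 = pos v,
        (forall t s, 0 <= t <= 1 -> 0 <= s <= 1 -> arc u v t = arc u v s -> t = s) &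
        (forall w t, 0 < t < 1 -> arc u v t <> pos w)].

(* In the drawing, the edge uv is crossed at most k times: the crossings of
   uv, i.e. pairs (other edge f, point p) where p is a common point of the
   interiors of the arcs of uv and f, form a set of size at most k. *)
Definition crossed_at_most (n : nat) (e : rel 'I_n)
    (arc : 'I_n -> 'I_n -> R -> point) (k : nat) (u v : 'I_n) : Prop :=
  exists L : list ('I_n * 'I_n * point), (length L <= k)%nat /\
    forall x y : 'I_n, (x < y)%N -> e x y -> (x, y) <> (u, v) ->
      forall t s, 0 < t < 1 -> 0 < s < 1 -> arc u v t = arc x y s ->
        In (x, y, arc u v t) L.

Definition k_planar (k n : nat) (e : rel 'I_n) : Prop :=
  exists pos arc, is_drawing e pos arc /\
    forall u v : 'I_n, (u < v)%N -> e u v -> crossed_at_most e arc k u v.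

(* Main.v *)
Require Import Defs.
From Stdlib Require Import ZArith Lia Lra Reals Classical.
From mathcomp Require Import all_boot zify.

(* MathComp graph on 'I_n + Stdlib reals. Construction: a cylinder
   (6 vertices per ring) lattice graph with 15 edge-orbits per ring, drawn
   via the map (X,Y) |-> (X+1)(cos(pi Y/3), sin(pi Y/3)). *)

Module MComp.
Local Open Scope Z_scope.
Definition rules : list (Z*Z*Z) :=
 [:: (0,1,-2); (0,1,1); (0,2,-1); (1,1,0); (1,1,1); (1,2,-1); (1,2,1); (2,2,1);
     (3,1,-1); (3,1,1); (4,0,1); (4,1,-1); (4,1,1); (0,0,-1); (5,1,-2)].
Definition ry (r : Z*Z*Z) := let '(y,_,_) := r in y.
Definition rdx (r : Z*Z*Z) := let '(_,dx,_) := r in dx.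
Definition rdy (r : Z*Z*Z) := let '(_,_,dy) := r in dy.
Definition tgt r := Z.modulo (ry r + rdy r) 6.
Definition matchf r (o r1 r2 : Z) : bool := Z.eqb r1 (ry r) && Z.eqb o (rdx r) && Z.eqb r2 (tgt r).
Definition adjZ o r1 r2 := List.existsb (fun r => matchf r o r1 r2) rules || List.existsb (fun r => matchf r (-o) r2 r1) rules.
Definition rng (a b : Z) : list Z := List.map (fun i => a + Z.of_nat i) (List.seq 0 (Z.to_nat (b - a + 1))).
Definition rows := rng 0 5.
Definition c4check := List.forallb (fun ra => List.forallb (fun ob => List.forallb (fun rb =>
  negb (adjZ ob ra rb) || List.forallb (fun oc => List.forallb (fun rc =>
   negb (adjZ (oc - ob) rb rc) || ((oc =? 0) && (rc =? ra)) ||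
   List.forallb (fun od => List.forallb (fun rd =>
     negb (adjZ (od - oc) rc rd && adjZ (0 - od) rd ra) || ((ob =? od) && (rb =? rd))) rows) (rng (-2) 2)) rows) (rng (-4) 4)) rows) (rng (-2) 2)) rows.
Lemma c4check_ok : c4check = true. Proof. vm_compute. reflexivity. Qed.
Definition pt := (Z*Z)%type.
Definition fnl := (Z*Z*Z)%type.
Definition ev (L : fnl) (p : pt) := let '(a,b,c) := L in a * fst p + b * snd p + c.
Definition cert_ok (L : fnl) (A B : pt*pt) : bool :=
  let '(a,b) := A in let '(c,d) := B in
  (ev L a <=? 0) && (ev L b <=? 0) && (0 <=? ev L c) && (0 <=? ev L d) &&
  ((ev L a <? 0) || (ev L b <? 0) || (0 <? ev L c) || (0 <? ev L d)).
Definition lineF (p q : pt) : fnl :=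
  (-(snd q - snd p), fst q - fst p, (snd q - snd p) * fst p - (fst q - fst p) * snd p).
Definition negF (L : fnl) : fnl := let '(a,b,c) := L in (-a,-b,-c).
Definition prj (w p : pt) := fst w * fst p + snd w * snd p.
Definition candF (A B : pt*pt) : list fnl :=
  let '(a,b) := A in let '(c,d) := B in
  let w := (fst b - fst a, snd b - snd a) in
  [:: lineF a b; negF (lineF a b); lineF c d; negF (lineF c d);
      (fst w, snd w, - Z.max (prj w a) (prj w b));
      (- fst w, - snd w, Z.min (prj w a) (prj w b))].
Definition nocross A B := List.existsb (fun L => cert_ok L A B) (candF A B).
Definition segA (r : Z*Z*Z) : pt*pt := ((0, ry r), (rdx r, ry r + rdy r)).
Definition segB (κ : Z * (Z*Z*Z) * Z) : pt*pt :=
  let '(c, r, k) := κ in ((c, ry r + 6*k), (c + rdx r, ry r + rdy r + 6*k)).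
Definition detAB (A B : pt*pt) :=
  let '(a,b) := A in let '(c,d) := B in
  (fst b - fst a) * (snd d - snd c) - (snd b - snd a) * (fst d - fst c).
Definition req (r r' : Z*Z*Z) := (ry r =? ry r') && (rdx r =? rdx r') && (rdy r =? rdy r').
Definition cands (r : Z*Z*Z) : list (Z * (Z*Z*Z) * Z) :=
  List.flat_map (fun c => List.flat_map (fun r' =>
     if (c =? 0) && req r' r then [::] else List.map (fun k => (c,r',k)) [:: -1; 0; 1]) rules) [:: -1; 0; 1].
Definition crosslist r := List.filter (fun κ => negb (nocross (segA r) (segB κ))) (cands r).
Definition crosscheck := List.forallb (fun r => (List.length (crosslist r) <=? 2)%nat &&
   List.forallb (fun κ => negb (detAB (segA r) (segB κ) =? 0)) (crosslist r)) rules.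
Lemma crosscheck_ok : crosscheck = true. Proof. vm_compute. reflexivity. Qed.

End MComp.
Import MComp.

Module MG.
Local Open Scope R_scope.

Lemma cert_sound L a1 a2 b1 b2 c1 c2 d1 d2 t s :
  cert_ok L ((a1,a2),(b1,b2)) ((c1,c2),(d1,d2)) = true -> 0 < t < 1 -> 0 < s < 1 ->
  IZR a1 + t * (IZR b1 - IZR a1) = IZR c1 + s * (IZR d1 - IZR c1) ->
  IZR a2 + t * (IZR b2 - IZR a2) = IZR c2 + s * (IZR d2 - IZR c2) -> False.
Proof.
  destruct L as [[al be] ga]. unfold cert_ok, ev; simpl.
  move=> H Ht Hs E1 E2.
  move/andP: H => [/andP [/andP [/andP [/Z.leb_le Ia /Z.leb_le Ib] /Z.leb_le Ic] /Z.leb_le Id] Hor].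
  set (La := (al * a1 + be * a2 + ga)%Z) in *.
  set (Lb := (al * b1 + be * b2 + ga)%Z) in *.
  set (Lc := (al * c1 + be * c2 + ga)%Z) in *.
  set (Ld := (al * d1 + be * d2 + ga)%Z) in *.
  have key : (1 - t) * IZR La + t * IZR Lb = (1 - s) * IZR Lc + s * IZR Ld.
  { rewrite /La /Lb /Lc /Ld !plus_IZR !mult_IZR.
    have -> : (1 - t) * (IZR al * IZR a1 + IZR be * IZR a2 + IZR ga) + t * (IZR al * IZR b1 + IZR be * IZR b2 + IZR ga)
      = IZR al * (IZR a1 + t * (IZR b1 - IZR a1)) + IZR be * (IZR a2 + t * (IZR b2 - IZR a2)) + IZR ga by ring.
    rewrite E1 E2. ring. }
  have Ha : IZR La <= 0 := IZR_le _ _ Ia.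
  have Hb : IZR Lb <= 0 := IZR_le _ _ Ib.
  have Hc : 0 <= IZR Lc := IZR_le _ _ Ic.
  have Hd : 0 <= IZR Ld := IZR_le _ _ Id.
  have P1 : (1 - t) * IZR La <= 0 by nra.
  have P2 : t * IZR Lb <= 0 by nra.
  have P3 : 0 <= (1 - s) * IZR Lc by nra.
  have P4 : 0 <= s * IZR Ld by nra.
  clearbody La Lb Lc Ld.
  have T1 : 0 < 1 - t by lra.
  have T2 : 0 < 1 - s by lra.
  case/orP: Hor => [/orP [/orP [H0|H0]|H0]|H0].
  - move/Z.ltb_lt: H0 => H0. have {}H0 : IZR La < 0 := IZR_lt _ _ H0.
    have : (1 - t) * IZR La < 0 by apply: Rmult_pos_neg; lra. lra.
  - move/Z.ltb_lt: H0 => H0. have {}H0 : IZR Lb < 0 := IZR_lt _ _ H0.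
    have : t * IZR Lb < 0 by apply: Rmult_pos_neg; lra. lra.
  - move/Z.ltb_lt: H0 => H0. have {}H0 : 0 < IZR Lc := IZR_lt _ _ H0.
    have : 0 < (1 - s) * IZR Lc by apply: Rmult_lt_0_compat; lra. lra.
  - move/Z.ltb_lt: H0 => H0. have {}H0 : 0 < IZR Ld := IZR_lt _ _ H0.
    have : 0 < s * IZR Ld by apply: Rmult_lt_0_compat; lra. lra.
Qed.

Lemma det_unique a1 a2 b1 b2 c1 c2 d1 d2 t s t' s' :
  detAB ((a1,a2),(b1,b2)) ((c1,c2),(d1,d2)) <> 0%Z ->
  IZR a1 + t * (IZR b1 - IZR a1) = IZR c1 + s * (IZR d1 - IZR c1) ->
  IZR a2 + t * (IZR b2 - IZR a2) = IZR c2 + s * (IZR d2 - IZR c2) ->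
  IZR a1 + t' * (IZR b1 - IZR a1) = IZR c1 + s' * (IZR d1 - IZR c1) ->
  IZR a2 + t' * (IZR b2 - IZR a2) = IZR c2 + s' * (IZR d2 - IZR c2) -> t = t'.
Proof.
  rewrite /detAB /= => Hd E1 E2 E3 E4.
  have HD : IZR ((b1 - a1) * (d2 - c2) - (b2 - a2) * (d1 - c1)) <> 0 by apply: not_0_IZR.
  rewrite minus_IZR !mult_IZR !minus_IZR in HD.
  have : (t - t') * ((IZR b1 - IZR a1) * (IZR d2 - IZR c2) - (IZR b2 - IZR a2) * (IZR d1 - IZR c1)) = 0.
  { have X1 : (t - t') * (IZR b1 - IZR a1) = (s - s') * (IZR d1 - IZR c1) by lra.
    have X2 : (t - t') * (IZR b2 - IZR a2) = (s - s') * (IZR d2 - IZR c2) by lra.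
    have -> : (t - t') * ((IZR b1 - IZR a1) * (IZR d2 - IZR c2) - (IZR b2 - IZR a2) * (IZR d1 - IZR c1))
       = ((t - t') * (IZR b1 - IZR a1)) * (IZR d2 - IZR c2) - ((t - t') * (IZR b2 - IZR a2)) * (IZR d1 - IZR c1) by ring.
    rewrite X1 X2. ring. }
  move/Rmult_integral => [H|H]; [lra | contradiction].
Qed.

Lemma no_int_strict (t : R) (z : Z) : 0 < t < 1 -> t = IZR z -> False.
Proof.
  move=> [H1 H2] E; subst t.
  have := lt_IZR _ _ H1; have := lt_IZR _ _ H2. lia.
Qed.

Lemma bezout_prim (a b p q z1 z2 : Z) (t : R) : (a * p + b * q = 1)%Z -> 0 < t < 1 ->
  IZR a * t = IZR z1 -> IZR b * t = IZR z2 -> False.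
Proof.
  move=> Hb Ht E1 E2.
  apply: (@no_int_strict _ (p * z1 + q * z2)%Z Ht).
  rewrite plus_IZR !mult_IZR -E1 -E2.
  have : IZR (a * p + b * q) = 1 by rewrite Hb.
  rewrite plus_IZR !mult_IZR => H. nra.
Qed.

End MG.
Import MG.

Module MPh.
Local Open Scope R_scope.

Definition Phi (X Y : R) : point := ((X + 1) * cos (PI * Y / 3), (X + 1) * sin (PI * Y / 3)).

Lemma Phi_shift6 X Y : Phi X (Y + 6) = Phi X Y.
Proof.
  rewrite /Phi.
  have -> : PI * (Y + 6) / 3 = PI * Y / 3 + 2 * PI by field.
  by rewrite cos_plus sin_plus cos_2PI sin_2PI !Rmult_1_r !Rmult_0_r Rminus_0_r Rplus_0_r.
Qed.

Lemma cos1_2kpi d : cos d = 1 -> exists k : Z, d = 2 * IZR k * PI.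
Proof.
  move=> H.
  have H2 : cos (2 * (d / 2)) = 1 by rewrite -H; f_equal; field.
  rewrite cos_2a_sin in H2.
  have : sin (d / 2) = 0 by nra.
  move/sin_eq_0_0 => [k Hk]. exists k. lra.
Qed.

Lemma Phi_inj X Y X' Y' : 0 <= X -> 0 <= X' -> Phi X Y = Phi X' Y' ->
  X = X' /\ exists k : Z, Y - Y' = 6 * IZR k.
Proof.
  rewrite /Phi => HX HX' [E1 E2].
  set a := PI * Y / 3 in E1 E2. set b := PI * Y' / 3 in E1 E2.
  have Sa := sin2_cos2 a. have Sb := sin2_cos2 b. rewrite /Rsqr in Sa Sb.
  have Esq : (X + 1) * (X + 1) = (X' + 1) * (X' + 1).
  { have -> : (X + 1) * (X + 1) = ((X+1) * cos a) * ((X+1) * cos a) + ((X+1) * sin a) * ((X+1) * sin a) by nra.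
    rewrite E1 E2. nra. }
  have EX : X = X' by nra.
  split => //. subst X'.
  have Hp : X + 1 <> 0 by lra.
  have Ec : cos a = cos b by apply: (Rmult_eq_reg_l (X + 1)).
  have Es : sin a = sin b by apply: (Rmult_eq_reg_l (X + 1)).
  have : cos (a - b) = 1 by rewrite cos_minus Ec Es; nra.
  move/cos1_2kpi => [k Hk]. exists k.
  rewrite /a /b in Hk.
  have HP := PI_RGT_0.
  apply: (Rmult_eq_reg_l PI); last lra.
  have : PI * (Y - Y') = 3 * (PI * Y / 3 - PI * Y' / 3) by field.
  rewrite Hk. lra.
Qed.

End MPh.
Import MPh.

Module MCt.
Local Open Scope R_scope.

Lemma cont1 (X0 DX Y0 DY : R) : continuity (fun t => (X0 + t * DX + 1) * cos (PI * (Y0 + t * DY) / 3)).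
Proof. apply: derivable_continuous. reg. Qed.
Lemma cont2 (X0 DX Y0 DY : R) : continuity (fun t => (X0 + t * DX + 1) * sin (PI * (Y0 + t * DY) / 3)).
Proof. apply: derivable_continuous. reg. Qed.

Lemma cont_eps (f : R -> R) : continuity f -> forall t eps, 0 < eps -> exists delta, 0 < delta /\
   forall s, Rabs (s - t) < delta -> Rabs (f s - f t) < eps.
Proof.
  move=> Hf t eps He.
  have := Hf t. rewrite /continuity_pt /continue_in /limit1_in /limit_in /= /R_dist.
  move=> H. case: (H eps He) => d [Hd Hd']. exists d. split => // s Hs.
  case: (Req_dec s t) => [->|Hne]. rewrite Rminus_diag Rabs_R0 //.
  apply: Hd'. split => //. split => //. by apply: not_eq_sym.
Qed.

Lemma cont_Phi_lin X0 DX Y0 DY : continuous_on01 (fun t => Phi (X0 + t * DX) (Y0 + t * DY)).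
Proof.
  move=> t _ eps He.
  case: (cont_eps _ (cont1 X0 DX Y0 DY) t eps He) => d1 [Hd1 H1].
  case: (cont_eps _ (cont2 X0 DX Y0 DY) t eps He) => d2 [Hd2 H2].
  exists (Rmin d1 d2). split. by apply: Rmin_pos.
  move=> s _ Hs. rewrite /Phi /=. split.
  - apply: H1. have := Rmin_l d1 d2. lra.
  - apply: H2. have := Rmin_r d1 d2. lra.
Qed.

End MCt.
Import MCt.

Module MGr.
Local Open Scope Z_scope.

Lemma rule_cases r : List.In r rules ->
  r = (0,1,-2) \/ r = (0,1,1) \/ r = (0,2,-1) \/ r = (1,1,0) \/ r = (1,1,1) \/ r = (1,2,-1) \/
  r = (1,2,1) \/ r = (2,2,1) \/ r = (3,1,-1) \/ r = (3,1,1) \/ r = (4,0,1) \/ r = (4,1,-1) \/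
  r = (4,1,1) \/ r = (0,0,-1) \/ r = (5,1,-2).
Proof. rewrite /rules /=. intuition. Qed.

Definition dyf (r1 r2 : Z) : Z := let d := Z.modulo (r2 - r1) 6 in if d <=? 2 then d else d - 6.

Lemma rule_facts r : List.In r rules ->
  [/\ 0 <= ry r <= 5, 0 <= rdx r <= 2, -2 <= rdy r <= 2, 0 <= tgt r <= 5 &
   [/\ (1 <= rdx r \/ ry r < tgt r), dyf (ry r) (tgt r) = rdy r,
       exists p q, rdx r * p + rdy r * q = 1 &
       ry r + rdy r - tgt r = 6 * ((ry r + rdy r) / 6) /\ -1 <= (ry r + rdy r) / 6 <= 1]].
Proof.
  move/rule_cases => H.
  intuition subst; (split; [cbn; lia.. | split; [cbn; lia | reflexivity | | cbn; lia]]);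
  first [ by exists 1, 0 | by exists 0, 1 | by exists 0, (-1) ].
Qed.

Definition colZ (u : nat) : Z := Z.of_nat (u %/ 6).
Definition rowZ (u : nat) : Z := Z.of_nat (u %% 6).

Lemma nat_decomp (u : nat) : Z.of_nat u = 6 * colZ u + rowZ u /\ 0 <= rowZ u <= 5 /\ 0 <= colZ u.
Proof. rewrite /colZ /rowZ. lia. Qed.

Definition eG (n : nat) : rel 'I_n := fun u v =>
  [&& (u < 6 * (n %/ 6))%N, (v < 6 * (n %/ 6))%N & adjZ (colZ v - colZ u) (rowZ u) (rowZ v)].
Arguments eG {n} _ _.

Lemma adjZ_sym o r1 r2 : adjZ (- o) r2 r1 = adjZ o r1 r2.
Proof. by rewrite /adjZ Z.opp_involutive orbC. Qed.

Lemma adjZ_cases o r1 r2 : adjZ o r1 r2 = true ->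
  (exists r, List.In r rules /\ r1 = ry r /\ o = rdx r /\ r2 = tgt r) \/
  (exists r, List.In r rules /\ r2 = ry r /\ - o = rdx r /\ r1 = tgt r).
Proof.
  rewrite /adjZ => /orP [/List.existsb_exists [r [Hr Hm]]|/List.existsb_exists [r [Hr Hm]]].
  - left; exists r; split => //. move: Hm; rewrite /matchf => /andP [/andP [/Z.eqb_eq ? /Z.eqb_eq ?] /Z.eqb_eq ?]. by [].
  - right; exists r; split => //. move: Hm; rewrite /matchf => /andP [/andP [/Z.eqb_eq ? /Z.eqb_eq ?] /Z.eqb_eq ?]. by [].
Qed.

Lemma adjZ_bound o r1 r2 : adjZ o r1 r2 = true -> -2 <= o <= 2.
Proof.
  case/adjZ_cases => [[r [Hr [_ [-> _]]]]|[r [Hr [_ [Ho _]]]]]; case: (rule_facts _ Hr) => _ H _ _ _; lia.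
Qed.

Lemma rng_in lo hi z : lo <= z <= hi -> List.In z (rng lo hi).
Proof.
  move=> H. rewrite /rng. apply/List.in_map_iff. exists (Z.to_nat (z - lo)). split. lia.
  apply/List.in_seq. lia.
Qed.

Lemma adjZ_irr r : 0 <= r <= 5 -> adjZ 0 r r = false.
Proof.
  move=> H.
  have C : List.forallb (fun r => negb (adjZ 0 r r)) rows = true by vm_compute.
  move/List.forallb_forall: C => /(_ r (rng_in _ _ _ H)). by case: (adjZ 0 r r).
Qed.

Lemma eG_sym n : forall u v : 'I_n, eG u v = eG v u.
Proof.
  move=> u v. rewrite /eG -adjZ_sym. 
  have -> : - (colZ v - colZ u) = colZ u - colZ v by lia.
  by case: (u < _)%N; case: (v < _)%N.
Qed.

Lemma eG_irr n : forall u : 'I_n, eG u u = false.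
Proof.
  move=> u. rewrite /eG Z.sub_diag adjZ_irr ?andbF //. have := nat_decomp u. lia.
Qed.

Lemma eG_rule n (u v : 'I_n) : eG u v -> (u < v)%N ->
  exists r, List.In r rules /\ rowZ u = ry r /\ colZ v - colZ u = rdx r /\ rowZ v = tgt r.
Proof.
  rewrite /eG => /and3P [_ _ H] Huv.
  case/adjZ_cases: H => [//|[r [Hr [E1 [E2 E3]]]]].
  case: (rule_facts _ Hr) => ? ? ? ? [H _ _ _].
  have := nat_decomp u. have := nat_decomp v. move/leP: Huv. move=> *. exfalso. lia.
Qed.

Lemma nt_or b x : b = true -> (negb b || x) = x.
Proof. by move=> ->. Qed.
Lemma nt_or2 b c x : b = true -> c = true -> (negb (b && c) || x) = x.
Proof. by move=> -> ->. Qed.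

Lemma c4_free n : C4_free (@eG n).
Proof.
  move=> [a [b [c [d [Hu Hab Hbc Hcd Hda]]]]].
  move/and3P: Hab => [_ _ Hab]. move/and3P: Hbc => [_ _ Hbc].
  move/and3P: Hcd => [_ _ Hcd]. move/and3P: Hda => [_ _ Hda].
  have Da := nat_decomp a. have Db := nat_decomp b. have Dc := nat_decomp c. have Dd := nat_decomp d.
  have [ob Eob] : {ob | colZ b - colZ a = ob} by eexists.
  have [oc Eoc] : {oc | colZ c - colZ a = oc} by eexists.
  have [od Eod] : {od | colZ d - colZ a = od} by eexists.
  have Bab := adjZ_bound _ _ _ Hab. have Bbc := adjZ_bound _ _ _ Hbc. have Bcd := adjZ_bound _ _ _ Hcd. have Bda := adjZ_bound _ _ _ Hda.
  have E1 : colZ c - colZ b = oc - ob by lia.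
  have E2 : colZ d - colZ c = od - oc by lia.
  have E3 : colZ a - colZ d = 0 - od by lia.
  rewrite Eob in Hab. rewrite E1 in Hbc. rewrite E2 in Hcd. rewrite E3 in Hda.
  have := c4check_ok. rewrite /c4check.
  move/List.forallb_forall/(_ (rowZ a) (rng_in 0 5 (rowZ a) ltac:(lia))).
  move/List.forallb_forall/(_ ob (rng_in (-2) 2 ob ltac:(lia))).
  move/List.forallb_forall/(_ (rowZ b) (rng_in 0 5 (rowZ b) ltac:(lia))).
  rewrite (nt_or _ _ Hab).
  move/List.forallb_forall/(_ oc (rng_in (-4) 4 oc ltac:(lia))).
  move/List.forallb_forall/(_ (rowZ c) (rng_in 0 5 (rowZ c) ltac:(lia))).
  rewrite (nt_or _ _ Hbc). case/orP.
  { move/andP => [/Z.eqb_eq H1 /Z.eqb_eq H2].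
    have : nat_of_ord a = nat_of_ord c by lia.
    move/val_inj => E. move: Hu. rewrite E /=. by rewrite !inE eqxx ?orbT. }
  move/List.forallb_forall/(_ od (rng_in (-2) 2 od ltac:(lia))).
  move/List.forallb_forall/(_ (rowZ d) (rng_in 0 5 (rowZ d) ltac:(lia))).
  rewrite (nt_or2 _ _ _ Hcd Hda). move/andP => [/Z.eqb_eq H1 /Z.eqb_eq H2].
  have : nat_of_ord b = nat_of_ord d by lia.
  move/val_inj => E. move: Hu. rewrite E /=. by rewrite !inE eqxx ?orbT ?andbF.
Qed.

End MGr.
Import MGr.

Module MDr.
Local Open Scope R_scope.

Definition dyuv (u v : nat) := dyf (rowZ u) (rowZ v).
Definition posG n (u : 'I_n) : point := Phi (IZR (colZ u)) (IZR (rowZ u)).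
Definition arcG n (u v : 'I_n) (t : R) : point :=
  Phi (IZR (colZ u) + t * IZR (colZ v - colZ u)) (IZR (rowZ u) + t * IZR (dyuv u v)).
Arguments posG {n} _.
Arguments arcG {n} _ _ _.

Lemma Phi_shiftN X Y m : Phi X (Y + 6 * INR m) = Phi X Y.
Proof.
  elim: m => [|m IH]. by rewrite /= Rmult_0_r Rplus_0_r.
  rewrite S_INR. have -> : Y + 6 * (INR m + 1) = (Y + 6 * INR m) + 6 by ring.
  by rewrite Phi_shift6.
Qed.

Lemma Phi_shiftZ X Y k : Phi X (Y + 6 * IZR k) = Phi X Y.
Proof.
  have [m [->|->]] : exists m, (k = Z.of_nat m \/ k = - Z.of_nat m)%Z by exists (Z.abs_nat k); lia.
  - by rewrite -INR_IZR_INZ Phi_shiftN.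
  - rewrite opp_IZR -INR_IZR_INZ.
    have := Phi_shiftN X (Y + 6 * - INR m) m.
    have -> : Y + 6 * - INR m + 6 * INR m = Y by ring.
    by move=> ->.
Qed.

Lemma IZR_nonneg z : (0 <= z)%Z -> 0 <= IZR z.
Proof. move=> H. by apply: IZR_le. Qed.

Lemma posG_inj n : injective (@posG n).
Proof.
  move=> u w. rewrite /posG.
  have Du := nat_decomp u. have Dw := nat_decomp w.
  move/Phi_inj => [].
  - apply: IZR_nonneg; lia.
  - apply: IZR_nonneg; lia.
  move=> /eq_IZR Ec [k Hk].
  rewrite -minus_IZR -mult_IZR in Hk. move/eq_IZR: Hk => Hk.
  apply: ord_inj. apply: Nat2Z.inj. lia.
Qed.

Lemma Rmul_bound t d : 0 <= t <= 1 -> (-2 <= d <= 2)%Z -> -2 <= t * IZR d <= 2.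
Proof.
  move=> Ht [H1 H2]. have := IZR_le _ _ H1. have := IZR_le _ _ H2. move=> A B. nra.
Qed.

Lemma Rmul_bound0 t d : 0 <= t <= 1 -> (0 <= d <= 2)%Z -> 0 <= t * IZR d <= 2.
Proof.
  move=> Ht [H1 H2]. have := IZR_le _ _ H1. have := IZR_le _ _ H2. move=> A B. nra.
Qed.

Lemma Rmul_bound0s t d : 0 <= t < 1 -> (0 <= d <= 2)%Z -> 0 <= t * IZR d < 2.
Proof.
  move=> Ht [H1 H2]. have := IZR_le _ _ H1. have := IZR_le _ _ H2. move=> A B. nra.
Qed.

Section Edge.
Variables (n : nat) (u v : 'I_n) (r : Z * Z * Z).
Hypotheses (Hr : List.In r rules) (Hru : rowZ u = ry r) (Hc : (colZ v - colZ u)%Z = rdx r) (Hrv : rowZ v = tgt r).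

Lemma dyuv_r : dyuv u v = rdy r.
Proof. rewrite /dyuv Hru Hrv. by case: (rule_facts _ Hr) => _ _ _ _ []. Qed.

Lemma arcG_eq t : arcG u v t = Phi (IZR (colZ u) + t * IZR (rdx r)) (IZR (ry r) + t * IZR (rdy r)).
Proof. by rewrite /arcG Hc dyuv_r Hru. Qed.

Lemma arcG_0 : arcG u v 0 = posG u.
Proof. by rewrite /arcG /posG !Rmult_0_l !Rplus_0_r. Qed.

Lemma arcG_1 : arcG u v 1 = posG v.
Proof.
  rewrite arcG_eq /posG !Rmult_1_l.
  case: (rule_facts _ Hr) => _ _ _ _ [_ _ _ [Eq _]].
  have -> : IZR (colZ u) + IZR (rdx r) = IZR (colZ v) by rewrite -plus_IZR -Hc; f_equal; lia.
  have -> : IZR (ry r) + IZR (rdy r) = IZR (rowZ v) + 6 * IZR ((ry r + rdy r) / 6).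
  { rewrite -plus_IZR -mult_IZR -plus_IZR. f_equal. lia. }
  by rewrite Phi_shiftZ.
Qed.

Lemma arcG_inj t s : 0 <= t <= 1 -> 0 <= s <= 1 -> arcG u v t = arcG u v s -> t = s.
Proof.
  move=> Ht Hs. rewrite !arcG_eq.
  case: (rule_facts _ Hr) => _ Hdx Hdy _ [_ _ [p [q Hpq]] _].
  have Du := nat_decomp u.
  have C0 : 0 <= IZR (colZ u) by apply: IZR_nonneg; lia.
  have B1 := Rmul_bound0 _ _ Ht Hdx. have B2 := Rmul_bound0 _ _ Hs Hdx.
  have B3 := Rmul_bound _ _ Ht Hdy. have B4 := Rmul_bound _ _ Hs Hdy.
  move/Phi_inj => [].
  - lra.
  - lra.
  move=> EX [k Hk].
  have Hk0 : (k = 0)%Z.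
  { have : -1 < IZR k < 1 by lra. move=> [/lt_IZR ? /lt_IZR ?]. lia. }
  subst k.
  have E1 : (t - s) * IZR (rdx r) = 0 by lra.
  have E2 : (t - s) * IZR (rdy r) = 0 by lra.
  have : IZR (rdx r * p + rdy r * q) = 1 by rewrite Hpq.
  rewrite plus_IZR !mult_IZR => H1.
  have : (t - s) * (IZR (rdx r) * IZR p + IZR (rdy r) * IZR q) = 0.
  { have -> : (t - s) * (IZR (rdx r) * IZR p + IZR (rdy r) * IZR q) = ((t - s) * IZR (rdx r)) * IZR p + ((t - s) * IZR (rdy r)) * IZR q by ring.
    rewrite E1 E2. ring. }
  rewrite H1. lra.
Qed.

Lemma arcG_avoid (w : 'I_n) t : 0 < t < 1 -> arcG u v t <> posG w.
Proof.
  move=> Ht. rewrite arcG_eq /posG => E.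
  case: (rule_facts _ Hr) => _ Hdx Hdy _ [_ _ [p [q Hpq]] _].
  have Du := nat_decomp u. have Dw := nat_decomp w.
  have C0 : 0 <= IZR (colZ u) by apply: IZR_nonneg; lia.
  have B1 := Rmul_bound0 _ _ (conj (Rlt_le _ _ (proj1 Ht)) (Rlt_le _ _ (proj2 Ht))) Hdx.
  move: E => /Phi_inj [].
  - lra.
  - apply: IZR_nonneg; lia.
  move=> EX [k Hk].
  apply: (@bezout_prim (rdx r) (rdy r) p q (colZ w - colZ u) (rowZ w + 6 * k - ry r) t Hpq Ht).
  - rewrite minus_IZR. lra.
  - rewrite !minus_IZR plus_IZR mult_IZR. lra.
Qed.

End Edge.

End MDr.
Import MDr.

Module MCr.
Local Open Scope R_scope.

Lemma cover {A K : Type} (Ks : list K) : forall (S : A -> Prop) (Rl : A -> K -> Prop),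
  (forall z, S z -> exists κ, List.In κ Ks /\ Rl z κ) ->
  (forall z z' κ, List.In κ Ks -> S z -> S z' -> Rl z κ -> Rl z' κ -> z = z') ->
  exists L : list A, (length L <= length Ks)%coq_nat /\ forall z, S z -> List.In z L.
Proof.
  elim: Ks => [|κ Ks IH] S Rl H1 H2.
  - exists nil. split => //. move=> z /H1 [κ [[] _]].
  - case: (classic (exists z0, S z0 /\ Rl z0 κ)) => [[z0 [Sz0 Rz0]]|Hno].
    + have H1' : forall z, (S z /\ ~ Rl z κ) -> exists κ', List.In κ' Ks /\ Rl z κ'.
      { move=> z [Sz nR]. case: (H1 z Sz) => κ' [[E|Hin] Rz].
        - subst κ'. contradiction.
        - by exists κ'. }
      have H2' : forall z z' κ', List.In κ' Ks -> (S z /\ ~ Rl z κ) -> (S z' /\ ~ Rl z' κ) -> Rl z κ' -> Rl z' κ' -> z = z'.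
      { move=> z z' κ' Hin [Sz _] [Sz' _]. apply: H2 => //. by right. }
      have [L [HL HS]] := IH _ Rl H1' H2'.
      exists (z0 :: L). split. simpl. lia.
      move=> z Sz. case: (classic (Rl z κ)) => [Rz|nR].
      * left. apply: (H2 z0 z κ) => //. by left.
      * right. by apply: HS.
    + have H1' : forall z, S z -> exists κ', List.In κ' Ks /\ Rl z κ'.
      { move=> z Sz. case: (H1 z Sz) => κ' [[E|Hin] Rz].
        - subst κ'. exfalso. apply: Hno. by exists z.
        - by exists κ'. }
      have H2' : forall z z' κ', List.In κ' Ks -> S z -> S z' -> Rl z κ' -> Rl z' κ' -> z = z'.
      { move=> z z' κ' Hin. apply: H2. by right. }
      have [L [HL HS]] := IH S Rl H1' H2'.
      exists L. split => //. simpl. lia.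
Qed.

Lemma req_eq r' r : req r' r = true -> r' = r.
Proof.
  case: r' => [[a b] c]; case: r => [[a' b'] c'].
  by rewrite /req /= => /andP [/andP [/Z.eqb_eq -> /Z.eqb_eq ->] /Z.eqb_eq ->].
Qed.

Lemma IZR0 : IZR 0 = 0. Proof. by []. Qed.

Lemma cross_edge n (u v : 'I_n) : (u < v)%N -> eG u v -> crossed_at_most (@eG n) (@arcG n) 2 u v.
Proof.
  move=> Huv Euv.
  have [r [Hr [Hru [Hc Hrv]]]] := eG_rule _ _ _ Euv Huv.
  have := crosscheck_ok. rewrite /crosscheck => /List.forallb_forall /(_ r Hr) /andP [HLen Hdet].
  move/Nat.leb_le: HLen => HLen.
  pose S := fun z : 'I_n * 'I_n * point => exists (x y : 'I_n) t s, z = (x, y, arcG u v t) /\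
     (x < y)%N /\ eG x y /\ (x, y) <> (u, v) /\ 0 < t < 1 /\ 0 < s < 1 /\ arcG u v t = arcG x y s.
  pose Rl := fun (z : 'I_n * 'I_n * point) (κ : Z * (Z*Z*Z) * Z) => let '(c, r', k) := κ in
     exists (x y : 'I_n) t s, z = (x, y, arcG u v t) /\
       Z.of_nat x = (6 * (colZ u + c) + ry r')%Z /\ Z.of_nat y = (6 * (colZ u + c + rdx r') + tgt r')%Z /\
       0 < t < 1 /\ 0 < s < 1 /\
       IZR 0 + t * (IZR (rdx r) - IZR 0) = IZR c + s * (IZR (c + rdx r') - IZR c) /\
       IZR (ry r) + t * (IZR (ry r + rdy r) - IZR (ry r)) =
         IZR (ry r' + 6 * k) + s * (IZR (ry r' + rdy r' + 6 * k) - IZR (ry r' + 6 * k)).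
  have H1 : forall z, S z -> exists κ, List.In κ (crosslist r) /\ Rl z κ.
  { move=> z [x [y [t [s [-> [Hxy [Exy [Hne [Ht [Hs E]]]]]]]]]].
    have [r' [Hr' [Hrx [Hc' Hry]]]] := eG_rule _ _ _ Exy Hxy.
    rewrite (arcG_eq _ _ _ _ Hr Hru Hc Hrv) (arcG_eq _ _ _ _ Hr' Hrx Hc' Hry) in E.
    case: (rule_facts _ Hr) => Fy Fdx Fdy Ft _.
    case: (rule_facts _ Hr') => Fy' Fdx' Fdy' Ft' _.
    have Du := nat_decomp u. have Dx := nat_decomp x.
    have Ht' : 0 <= t <= 1 by lra. have Hs' : 0 <= s <= 1 by lra.
    have B1 := Rmul_bound0s _ _ (conj (proj1 Ht') (proj2 Ht)) Fdx.
    have B2 := Rmul_bound0s _ _ (conj (proj1 Hs') (proj2 Hs)) Fdx'.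
    have B3 := Rmul_bound _ _ Ht' Fdy. have B4 := Rmul_bound _ _ Hs' Fdy'.
    have Cu : 0 <= IZR (colZ u) by apply: IZR_nonneg; lia.
    have Cx : 0 <= IZR (colZ x) by apply: IZR_nonneg; lia.
    move/Phi_inj: E => [] ; [lra | lra | move=> EX [k Hk]].
    have Yr1 := IZR_le _ _ (proj1 Fy). have Yr2 := IZR_le _ _ (proj2 Fy).
    have Yr3 := IZR_le _ _ (proj1 Fy'). have Yr4 := IZR_le _ _ (proj2 Fy').
    have Ec : IZR (colZ x - colZ u) = t * IZR (rdx r) - s * IZR (rdx r') by rewrite minus_IZR; lra.
    have Bc : (-2 < colZ x - colZ u < 2)%Z.
    { split; apply: lt_IZR; rewrite Ec; lra. }
    have Bk : (-2 < k < 2)%Z.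
    { split; apply: lt_IZR; lra. }
    have EQ1 : IZR 0 + t * (IZR (rdx r) - IZR 0) = IZR (colZ x - colZ u) + s * (IZR ((colZ x - colZ u) + rdx r') - IZR (colZ x - colZ u)).
    { rewrite plus_IZR. lra. }
    have EQ2 : IZR (ry r) + t * (IZR (ry r + rdy r) - IZR (ry r)) =
         IZR (ry r' + 6 * k) + s * (IZR (ry r' + rdy r' + 6 * k) - IZR (ry r' + 6 * k)).
    { rewrite !plus_IZR !mult_IZR. lra. }
    exists (colZ x - colZ u, r', k)%Z. split.
    - apply/List.filter_In. split.
      + rewrite /cands. apply/List.in_flat_map. exists (colZ x - colZ u)%Z. split.
        { have : (colZ x - colZ u = -1 \/ colZ x - colZ u = 0 \/ colZ x - colZ u = 1)%Z by lia.
          case=> [->|[->|->]]; simpl; tauto. }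
        apply/List.in_flat_map. exists r'. split => //.
        case Eq: ((colZ x - colZ u =? 0)%Z && req r' r).
        * exfalso. move/andP: Eq => [/Z.eqb_eq E0 /req_eq Er]. subst r'. apply: Hne.
          have Dy := nat_decomp y. have Dv := nat_decomp v.
          have -> : x = u by apply: ord_inj; apply: Nat2Z.inj; lia.
          have -> : y = v by apply: ord_inj; apply: Nat2Z.inj; lia.
          by [].
        * apply/List.in_map_iff. exists k. split => //.
          have : (k = -1 \/ k = 0 \/ k = 1)%Z by lia.
          case=> [->|[->|->]]; simpl; tauto.
      + case Enc: (nocross (segA r) (segB (colZ x - colZ u, r', k)%Z)) => //=.
        exfalso. move: Enc. rewrite /nocross => /List.existsb_exists [Lf [_ Hok]].
        rewrite /segA /segB in Hok.
        exact: (cert_sound _ _ _ _ _ _ _ _ _ _ _ Hok Ht Hs EQ1 EQ2).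
    - exists x, y, t, s. split => //. split. lia. split.
      have Dy := nat_decomp y. lia.
      by do 4 (split => //). }
  have H2 : forall z z' κ, List.In κ (crosslist r) -> S z -> S z' -> Rl z κ -> Rl z' κ -> z = z'.
  { move=> z z' [[c r'] k] Hin _ _.
    move=> [x [y [t [s [-> [Ex [Ey [Ht [Hs [E1 E2]]]]]]]]]].
    move=> [x' [y' [t' [s' [-> [Ex' [Ey' [Ht' [Hs' [E1' E2']]]]]]]]]].
    have -> : x' = x by apply: ord_inj; apply: Nat2Z.inj; lia.
    have -> : y' = y by apply: ord_inj; apply: Nat2Z.inj; lia.
    move/List.forallb_forall: Hdet => /(_ _ Hin).
    rewrite /segA /segB => /negbTE /Z.eqb_neq Hd.
    by rewrite (det_unique _ _ _ _ _ _ _ _ _ _ _ _ Hd E1' E2' E1 E2). }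
  have [L [HL HS]] := cover (crosslist r) S Rl H1 H2.
  exists L. split. lia.
  move=> x y Hxy Exy Hne t s Ht Hs E. apply: HS. by exists x, y, t, s.
Qed.

End MCr.
Import MCr.

Module MMn.

Definition rl (j : nat) := List.nth j rules (0,0,0)%Z.

Definition uniqcheck := List.forallb (fun j => List.forallb (fun j' =>
  negb ((ry (rl j) =? ry (rl j'))%Z && (rdx (rl j) =? rdx (rl j'))%Z && (tgt (rl j) =? tgt (rl j'))%Z) || Nat.eqb j j')
  (List.seq 0 15)) (List.seq 0 15).
Lemma uniqcheck_ok : uniqcheck = true. Proof. vm_compute. reflexivity. Qed.

Lemma rl_in j : (j < 15)%N -> List.In (rl j) rules.
Proof. move=> H. apply: List.nth_In. rewrite /rules /=. apply/ltP. done. Qed.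

Lemma rl_uniq j j' : (j < 15)%N -> (j' < 15)%N -> ry (rl j) = ry (rl j') -> rdx (rl j) = rdx (rl j') ->
  tgt (rl j) = tgt (rl j') -> j = j'.
Proof.
  move=> Hj Hj' E1 E2 E3.
  have := uniqcheck_ok. rewrite /uniqcheck.
  move/List.forallb_forall/(_ j ltac:(apply/List.in_seq; lia)).
  move/List.forallb_forall/(_ j' ltac:(apply/List.in_seq; lia)).
  rewrite E1 E2 E3 !Z.eqb_refl /=. by move/Nat.eqb_eq.
Qed.

Section Count.
Variable n' : nat.
Let n := n'.+1.
Let m := n %/ 6.
Definition sN (p : 'I_(m - 2) * 'I_15) : nat := 6 * p.1 + Z.to_nat (ry (rl p.2)).
Definition eN (p : 'I_(m - 2) * 'I_15) : nat := 6 * (p.1 + Z.to_nat (rdx (rl p.2))) + Z.to_nat (tgt (rl p.2)).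
Definition fE (p : 'I_(m - 2) * 'I_15) : 'I_n * 'I_n := (inord (sN p), inord (eN p)).

Lemma sN_eN_facts p :
  [/\ (sN p < eN p)%N, (eN p < 6 * m)%N, colZ (sN p) = Z.of_nat p.1, rowZ (sN p) = ry (rl p.2) &
   colZ (eN p) - colZ (sN p) = rdx (rl p.2) /\ rowZ (eN p) = tgt (rl p.2)]%Z.
Proof.
  case: p => [i j] /=.
  have Hi := ltn_ord i. have Hj := ltn_ord j.
  case: (rule_facts _ (rl_in _ Hj)) => Fy Fdx Fdy Ft [Ford _ _ _].
  rewrite /sN /eN /colZ /rowZ /=.
  split; lia.
Qed.

Lemma fE_inj : injective fE.
Proof.
  move=> [i j] [i' j'] [Es Ee].
  have Hi := ltn_ord i. have Hj := ltn_ord j. have Hi' := ltn_ord i'. have Hj' := ltn_ord j'.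
  case: (sN_eN_facts (i, j)) => L0 L1 _ _ _. case: (sN_eN_facts (i', j')) => L0' L2 _ _ _.
  have L1' : (sN (i, j) < n)%N by move: L0 L1; rewrite /m /n; lia.
  have L2' : (sN (i', j') < n)%N by move: L0' L2; rewrite /m /n; lia.
  have L3' : (eN (i, j) < n)%N by move: L1; rewrite /m /n; lia.
  have L4' : (eN (i', j') < n)%N by move: L2; rewrite /m /n; lia.
  move/(congr1 val): Es. rewrite /= !inordK // => Es.
  move/(congr1 val): Ee. rewrite /= !inordK // => Ee.
  case: (rule_facts _ (rl_in _ Hj)) => Fy Fdx Fdy Ft _.
  case: (rule_facts _ (rl_in _ Hj')) => Fy' Fdx' Fdy' Ft' _.
  move: Es Ee. rewrite /sN /eN /= => Es Ee.
  have Eii : nat_of_ord i = nat_of_ord i' by lia.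
  have Ejj : nat_of_ord j = nat_of_ord j' by apply: rl_uniq => //; lia.
  by rewrite (ord_inj Eii) (ord_inj Ejj).
Qed.

Lemma count_edges : (15 * (m - 2) <= num_edges (@eG n))%N.
Proof.
  rewrite /num_edges.
  have -> : (15 * (m - 2))%N = #|fE @: [set: 'I_(m - 2) * 'I_15]|.
  { rewrite card_imset; last exact: fE_inj. by rewrite cardsT card_prod !card_ord mulnC. }
  apply: subset_leq_card. apply/subsetP => e /imsetP [p _ ->].
  rewrite inE /fE /=.
  case: (sN_eN_facts p) => Hlt Hlt2 Ec Er [Ed Et].
  have L1 : (sN p < n)%N by move: Hlt2; rewrite /m /n; lia.
  have L2 : (eN p < n)%N by move: Hlt2; rewrite /m /n; lia.
  rewrite !inordK //. rewrite Hlt /=. rewrite /eG !inordK //.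
  apply/and3P. split.
  - rewrite -/m. lia.
  - rewrite -/m. lia.
  - rewrite Ed Er Et /adjZ. apply/orP. left. apply/List.existsb_exists. exists (rl p.2). split.
    + apply: rl_in. exact: ltn_ord.
    + by rewrite /matchf !Z.eqb_refl.
Qed.
End Count.

End MMn.
Import MMn.

Theorem theorem14 :
  exists C N : nat, forall n : nat, (N <= n)%N ->
    exists e : rel 'I_n,
      [/\ simple_graph e, C4_free e, k_planar 2 e &
          (5 * n <= 2 * num_edges e + 2 * C)%N].
Proof.
  exists 43%N, 0%N => n _. exists (@eG n). split.
  - split. exact: eG_sym. exact: eG_irr.
  - exact: c4_free.
  - exists (@posG n), (@arcG n). split.
    + split. exact: posG_inj.
      move=> u v Huv Euv.
      have [r [Hr [Hru [Hc Hrv]]]] := eG_rule _ _ _ Euv Huv.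
      split.
      * rewrite /arcG. exact: cont_Phi_lin.
      * exact: arcG_0.
      * exact: (arcG_1 _ _ _ _ Hr Hru Hc Hrv).
      * move=> t s Ht Hs. exact: (arcG_inj _ _ _ _ Hr Hru Hc Hrv t s Ht Hs).
      * move=> w t Ht. exact: (arcG_avoid _ _ _ _ Hr Hru Hc Hrv w t Ht).
    + move=> u v Huv Euv. exact: cross_edge.
  - case: n => [|n'].
    + by [].
    + have := count_edges n'. lia.
Qed.
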